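(* Let $P,N>0$. If $\mathcal{C}$ is a $(P,N,1)$-sphere packing, then it is also a $(P,N',L)$-multiple packing for any $0\le N'<\frac{2(L-1)N}{L}$ and any $L\in\mathbb{Z}_{\ge2}$.
   Context: $\mathcal{B}^n(y,r)$ is the closed Euclidean ball in $\mathbb{R}^n$ of radius $r$ centered at $y$, $\mathcal{B}^n(r)=\mathcal{B}^n(0,r)$. For $P,N>0$ and $K\in\mathbb{Z}_{\ge1}$, a set $\mathcal{C}\subseteq\mathcal{B}^n(\sqrt{nP})$ is a $(P,N,K)$-multiple packing if $|\mathcal{C}\cap\mathcal{B}^n(y,\sqrt{nN})|\le K$ for every $y\in\mathbb{R}^n$; for $K=1$ it is called a $(P,N,1)$-sphere packing. *)

(* Defs.v *)
From mathcomp Require Import all_boot all_order all_algebra.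
From mathcomp Require Import all_classical reals.
Set Implicit Arguments. Unset Strict Implicit. Unset Printing Implicit Defensive.
Import Order.TTheory GRing.Theory Num.Theory.
Local Open Scope ring_scope.
Local Open Scope classical_set_scope.

Definition enorm (R : realType) (n : nat) (v : 'rV[R]_n) : R :=
  Num.sqrt (\sum_(i < n) v ord0 i ^+ 2).

Definition cball (R : realType) (n : nat) (y : 'rV[R]_n) (r : R) : set 'rV[R]_n :=
  [set x | enorm (x - y) <= r].

Definition card_atmost (T : eqType) (A : set T) (K : nat) : Prop :=
  forall s : seq T, uniq s -> (forall x, x \in s -> A x) -> (size s <= K)%N.

Definition multiple_packing (R : realType) (n : nat) (P N : R) (K : nat)
    (C : set 'rV[R]_n) : Prop :=
  C `<=` cball 0 (Num.sqrt (n%:R * P)) /\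
  forall y : 'rV[R]_n, card_atmost (C `&` cball y (Num.sqrt (n%:R * N))) K.

Definition sphere_packing (R : realType) (n : nat) (P N : R) (C : set 'rV[R]_n) : Prop :=
  multiple_packing P N 1 C.

(* Main.v *)
Require Import Defs.
From mathcomp Require Import all_boot all_order all_algebra.
From mathcomp Require Import all_classical reals.
From mathcomp Require Import ring lra.
Import Order.TTheory GRing.Theory Num.Theory.
Local Open Scope ring_scope.
Local Open Scope classical_set_scope.
Set Implicit Arguments. Unset Strict Implicit.

Section Aux.
Variable R : realType.

Lemma sum_const_count (T : Type) (r : seq T) (P : pred T) (x : R) :
  \sum_(i <- r | P i) x = x *+ count P r.
Proof.
elim: r => [|a r IH]; first by rewrite big_nil.
rewrite big_cons IH /=; case: (P a) => //=; by rewrite mulrS.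
Qed.

Lemma coord_id (T : Type) (s : seq T) (f : T -> R) :
  \sum_(a <- s) \sum_(b <- s) (f a - f b) ^+ 2 =
  2 * (size s)%:R * \sum_(a <- s) f a ^+ 2 - 2 * (\sum_(a <- s) f a) ^+ 2.
Proof.
have e : forall a b, (f a - f b) ^+ 2 = f a ^+ 2 + f b ^+ 2 - 2 * f a * f b.
  by move=> a b; ring.
under eq_bigr do under eq_bigr do rewrite e.
set F2 := \sum_(i <- s) f i ^+ 2. set F := \sum_(i <- s) f i.
have h1 : forall i, \sum_(j <- s) 2 * f i * f j = 2 * f i * F.
  by move=> i; rewrite mulr_sumr.
have h2 : forall i, \sum_(j <- s) f i ^+ 2 = f i ^+ 2 *+ size s.
  by move=> i; rewrite sum_const_count count_predT.
under eq_bigr do rewrite sumrB big_split /= h1 h2.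
rewrite sumrB big_split /= sumrMnl sum_const_count count_predT.
have h3 : \sum_(i <- s) 2 * f i * F = 2 * F * F.
  by rewrite -mulr_suml -mulr_sumr.
rewrite h3 -/F2 -mulr_natr; ring.
Qed.

Variable n : nat.

Definition sq (v : 'rV[R]_n) : R := \sum_(i < n) v ord0 i ^+ 2.

Lemma sq_ge0 v : 0 <= sq v.
Proof. by apply: sumr_ge0 => i _; rewrite sqr_ge0. Qed.

Lemma enorm_le v r : 0 <= r -> (enorm v <= Num.sqrt r) = (sq v <= r).
Proof. by move=> r0; rewrite /enorm ler_sqrt. Qed.

Lemma sqZ c v : sq (c *: v) = c ^+ 2 * sq v.
Proof. rewrite /sq mulr_sumr; apply: eq_bigr => i _; by rewrite mxE exprMn. Qed.

Lemma sq_n0 : n = 0%N -> forall v, sq v = 0.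
Proof.
move=> n0 v; rewrite /sq; apply: big1 => i _; exfalso.
have := ltn_ord i; move: (nat_of_ord i) => k; by rewrite n0.
Qed.

Lemma sep (P N : R) (C : set 'rV[R]_n) : 0 <= N -> sphere_packing P N C ->
  forall a b, C a -> C b -> a != b -> 4 * (n%:R * N) < sq (a - b).
Proof.
move=> N0 [_ H] a b Ca Cb ab.
rewrite ltNge; apply/negP => hle.
pose c := 2^-1 *: (a + b).
have nN0 : 0 <= n%:R * N by rewrite mulr_ge0.
have ea : a - c = 2^-1 *: (a - b).
  by apply/rowP => i; rewrite !mxE; lra.
have eb : b - c = (- 2^-1) *: (a - b).
  by apply/rowP => i; rewrite !mxE; lra.
have key : forall x, x \in [:: a; b] -> enorm (x - c) <= Num.sqrt (n%:R * N).
  move=> x; rewrite !inE => /orP [] /eqP ->; rewrite enorm_le //.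
    by rewrite ea sqZ; lra.
  by rewrite eb sqZ; lra.
have := H c [:: a; b]; rewrite /= inE ab /= => /(_ isT).
have hh : forall x, x \in [:: a; b] -> (C `&` cball c (Num.sqrt (n%:R * N))) x.
  move=> x hx; split; last exact: key.
  by move: hx; rewrite !inE => /orP [] /eqP ->.
by move=> /(_ hh).
Qed.

End Aux.

Theorem mainTheorem9 (R : realType) (n : nat) (P N : R) (C : set 'rV[R]_n) :
  0 < P -> 0 < N -> sphere_packing P N C ->
  forall (L : nat) (N' : R), (2 <= L)%N ->
    0 <= N' -> N' < (2 * (L%:R - 1) * N) / L%:R ->
    multiple_packing P N' L C.
Proof.
move=> P0 N0 sp L N' L2 N'0 hN'.
split; first by case: sp.
move=> y s us hs.
rewrite leqNgt; apply/negP => hm.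
have hC : forall x, x \in s -> C x by move=> x /hs [].
have hB : forall x, x \in s -> sq (x - y) <= n%:R * N'.
  move=> x /hs [_]; rewrite /cball /= enorm_le //.
  by rewrite mulr_ge0.
have n0 : (0 < n)%N.
  have s2 : (2 <= size s)%N by apply: leq_trans L2 (ltnW hm).
  move: us hC s2; clear hs hB hm; case: s => [|a [|b t]] // /andP [abt _] hC _.
  have ab : a != b by apply: contraNneq abt => ->; rewrite inE eqxx.
  have := sep (ltW N0) sp (hC a (mem_head _ _)) (hC b _) ab.
  rewrite !inE eqxx orbT => /(_ isT).
  rewrite lt0n; apply: contraTneq => n0; rewrite (sq_n0 n0) n0 mul0r mulr0 ltxx.
  done.
set m := size s in hm.
have m1 : (1 <= m)%N := leq_ltn_trans (leq0n L) hm.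
pose fy (a : 'rV[R]_n) (i : 'I_n) := a ord0 i - y ord0 i.
have e1 : forall a b, sq (a - b) = \sum_(i < n) (fy a i - fy b i) ^+ 2.
  move=> a b; apply: eq_bigr => i _; rewrite !mxE /fy; congr (_ ^+ 2); ring.
have e2 : forall a, sq (a - y) = \sum_(i < n) fy a i ^+ 2.
  move=> a; apply: eq_bigr => i _; by rewrite !mxE.
have up : \sum_(a <- s) \sum_(b <- s) sq (a - b) <= 2 * m%:R * \sum_(a <- s) sq (a - y).
  under eq_bigr do under eq_bigr do rewrite e1.
  under eq_bigr do rewrite exchange_big /=.
  rewrite exchange_big /=.
  under eq_bigr do rewrite coord_id.
  rewrite [X in _ <= _ * X](eq_bigr _ (fun a _ => e2 a)).
  rewrite exchange_big /= mulr_sumr.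
  apply: ler_sum => i _.
  by rewrite -/m lerBlDr lerDl mulr_ge0 // sqr_ge0.
have h : forall a, a \in s -> 4 * (n%:R * N) * (m%:R - 1) <= \sum_(b <- s) sq (a - b).
  move=> a ain.
  rewrite (bigID (fun b => b != a)) /=.
  apply: le_trans (_ : _ <= \sum_(b <- s | b != a) sq (a - b)) _; last first.
    by rewrite lerDl sumr_ge0 // => b _; exact: sq_ge0.
  apply: le_trans (_ : _ <= \sum_(b <- s | b != a) 4 * (n%:R * N)) _.
    have cnt : count (fun b => b != a) s = (m - 1)%N.
      rewrite /m -(count_predC (pred1 a)) count_uniq_mem // ain addKn.
      by apply: eq_count => b.
    by rewrite sum_const_count cnt -[_ *+ (m - 1)%N]mulr_natr natrB.
  rewrite big_seq_cond [X in _ <= X]big_seq_cond; apply: ler_sum => b /andP [bin ba].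
  by apply/ltW/(sep (ltW N0) sp); [exact: hC|exact: hC|rewrite eq_sym].
have lo : 4 * (n%:R * N) * (m%:R - 1) * m%:R <= \sum_(a <- s) \sum_(b <- s) sq (a - b).
  apply: le_trans (_ : _ <= \sum_(a <- s) 4 * (n%:R * N) * (m%:R - 1)) _.
    by rewrite sum_const_count count_predT -[_ *+ size s]mulr_natr.
  rewrite big_seq [X in _ <= X]big_seq; apply: ler_sum => a; exact: h.
have up2 : \sum_(a <- s) sq (a - y) <= n%:R * N' * m%:R.
  apply: le_trans (_ : _ <= \sum_(a <- s) n%:R * N') _.
    rewrite big_seq [X in _ <= X]big_seq; apply: ler_sum => a; exact: hB.
  by rewrite sum_const_count count_predT -[_ *+ size s]mulr_natr.
have key := le_trans lo (le_trans up (ler_wpM2l _ up2)).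
have M0 : (0 : R) < m%:R by rewrite ltr0n.
have nr0 : (0 : R) < n%:R by rewrite ltr0n.
have hLM : L%:R + 1 <= m%:R :> R by rewrite natr1 ler_nat.
have L2R : (2 : R) <= L%:R by rewrite ler_nat.
have L0 : (0 : R) < L%:R by apply: lt_le_trans L2R.
rewrite ltr_pdivlMr // in hN'.
have h1 : 2 * N * (m%:R - 1) <= m%:R * N'.
  rewrite -(ler_pM2l (_ : 0 < 2 * m%:R * n%:R)); last by rewrite !mulr_gt0.
  have -> : 2 * m%:R * n%:R * (2 * N * (m%:R - 1)) = 4 * (n%:R * N) * (m%:R - 1) * m%:R by ring.
  have -> : 2 * m%:R * n%:R * (m%:R * N') = 2 * m%:R * (n%:R * N' * m%:R) by ring.
  by apply: key; rewrite mulr_ge0 // ltW.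
set M := m%:R in M0 hLM h1. set Lr := L%:R in hLM L2R L0 hN'.
have h2 := ler_wpM2r (ltW L0) h1.
have h3 : M * (N' * Lr) < M * (2 * (Lr - 1) * N) by rewrite ltr_pM2l.
have h4 : 0 <= N * (M - Lr - 1) by apply: mulr_ge0; [exact: ltW | lra].
nra.
Qed.
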